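(* For every $\gamma\in(0,\frac12)$ there is $c=c(\gamma)>0$ such that for every integer $k\ge3$ and every $1\le i\le k-1$, $$e_{i,k},\ p_{0\to1,i,k},\ p_{1\to0,i,k}\in[c,1-c].$$
   Context: $\|u\|$ denotes Hamming weight and $\mathbb{E}\mathrm{ven}_k=\{u\in\mathbb{F}_2^k:\|u\|\text{ even}\}$. For an integer $k\ge2$ and $\gamma\in(0,\frac12)$, $\alpha=\alpha(k,\gamma)$ is the unique $\alpha\in(0,1)$ with $\alpha\frac{(1+\alpha)^{k-1}-(1-\alpha)^{k-1}}{(1+\alpha)^k+(1-\alpha)^k}=\gamma$, and $P_{k,\gamma}$ is the distribution on $\mathbb{F}_2^k$ with $P_{k,\gamma}(u)=\alpha^{\|u\|}/Z$ for $u\in\mathbb{E}\mathrm{ven}_k$ and $0$ otherwise, where $Z=\frac{(1+\alpha)^k+(1-\alpha)^k}{2}$. Define $$p_{0\to1,i,k}=\alpha\frac{(1+\alpha)^{k-i}-(1-\alpha)^{k-i}}{(1+\alpha)^{k-i+1}+(1-\alpha)^{k-i+1}},\qquad p_{1\to0,i,k}=\alpha\frac{(1+\alpha)^{k-i}+(1-\alpha)^{k-i}}{(1+\alpha)^{k-i+1}-(1-\alpha)^{k-i+1}},$$ and $e_{i,k}=\Pr_{u\sim P_{k,\gamma}}\big(u_1+\dots+u_i\text{ is odd}\big)$. *)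

(* Defs.v *)
From Stdlib Require Import Reals List Arith.
Import ListNotations.
Open Scope R_scope.

(* All vectors of F_2^k, represented as boolean lists of length k;
   coordinate u_j (1-based) is the j-th element of the list. *)
Fixpoint bvecs (k : nat) : list (list bool) :=
  match k with
  | O => [ [] ]
  | S k' => map (cons false) (bvecs k') ++ map (cons true) (bvecs k')
  end.

Definition hw (u : list bool) : nat := length (filter (fun b : bool => b) u).

Definition rsum {A : Type} (f : A -> R) (l : list A) : R :=
  fold_right (fun x acc => f x + acc) 0 l.

Definition is_alpha (k : nat) (gamma alpha : R) : Prop :=
  0 < alpha < 1 /\
  alpha * ((1 + alpha) ^ (k - 1) - (1 - alpha) ^ (k - 1))
        / ((1 + alpha) ^ k + (1 - alpha) ^ k) = gamma.

Definition Zk (k : nat) (alpha : R) : R :=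
  ((1 + alpha) ^ k + (1 - alpha) ^ k) / 2.

(* P_{k,gamma}(u), written in terms of alpha = alpha(k,gamma) *)
Definition Pk (k : nat) (alpha : R) (u : list bool) : R :=
  if Nat.even (hw u) then alpha ^ (hw u) / Zk k alpha else 0.

Definition e_ik (k i : nat) (alpha : R) : R :=
  rsum (fun u => if Nat.odd (hw (firstn i u)) then Pk k alpha u else 0) (bvecs k).

Definition p01 (k i : nat) (alpha : R) : R :=
  alpha * ((1 + alpha) ^ (k - i) - (1 - alpha) ^ (k - i))
        / ((1 + alpha) ^ (k - i + 1) + (1 - alpha) ^ (k - i + 1)).

Definition p10 (k i : nat) (alpha : R) : R :=
  alpha * ((1 + alpha) ^ (k - i) + (1 - alpha) ^ (k - i))
        / ((1 + alpha) ^ (k - i + 1) - (1 - alpha) ^ (k - i + 1)).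

Definition in_c (c x : R) : Prop := c <= x <= 1 - c.

(* Main.v *)
Require Import Defs.
From Stdlib Require Import Reals List Arith Lra Lia Psatz.
Import ListNotations.
Open Scope R_scope.

Lemma rsum_cons {A} (f : A -> R) x l : rsum f (x :: l) = f x + rsum f l.
Proof. reflexivity. Qed.
Lemma rsum_app {A} (f : A -> R) l1 l2 : rsum f (l1 ++ l2) = rsum f l1 + rsum f l2.
Proof. induction l1; cbn [app]. - change (rsum f [] ) with 0; lra. - rewrite !rsum_cons, IHl1; lra. Qed.
Lemma rsum_map {A B} (f : B -> R) (g : A -> B) l : rsum f (map g l) = rsum (fun x => f (g x)) l.
Proof. induction l; [reflexivity|]. cbn [map]. rewrite !rsum_cons, IHl; reflexivity. Qed.
Lemma rsum_ext {A} (f g : A -> R) l : (forall x, f x = g x) -> rsum f l = rsum g l.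
Proof. intros H; induction l; [reflexivity|]. rewrite !rsum_cons, IHl, H; reflexivity. Qed.
Lemma rsum_add {A} (f g : A -> R) l : rsum (fun x => f x + g x) l = rsum f l + rsum g l.
Proof. induction l; [unfold rsum; simpl; lra|]. rewrite !rsum_cons, IHl; lra. Qed.
Lemma rsum_scal {A} (f : A -> R) c l : rsum (fun x => c * f x) l = c * rsum f l.
Proof. induction l; [unfold rsum; simpl; lra|]. rewrite !rsum_cons, IHl; lra. Qed.

Lemma Gsum x y : forall n i, (i <= n)%nat ->
  rsum (fun u => x ^ hw (firstn i u) * y ^ hw (skipn i u)) (bvecs n) = (1+x)^i * (1+y)^(n-i).
Proof.
  induction n; intros i Hi.
  - destruct i; [|lia]. unfold rsum; simpl. unfold hw; simpl. lra.
  - cbn [bvecs]. rewrite rsum_app, !rsum_map. destruct i.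
    + rewrite (rsum_ext (fun u => x ^ hw (firstn 0 (false::u)) * y ^ hw (skipn 0 (false::u))) (fun u => x ^ hw (firstn 0 u) * y ^ hw (skipn 0 u))).
      2:{ intro u; unfold hw; simpl; ring. }
      rewrite (rsum_ext (fun u => x ^ hw (firstn 0 (true::u)) * y ^ hw (skipn 0 (true::u))) (fun u => y * (x ^ hw (firstn 0 u) * y ^ hw (skipn 0 u)))).
      2:{ intro u; unfold hw; simpl; ring. }
      rewrite rsum_scal, IHn by lia. rewrite !Nat.sub_0_r. simpl. ring.
    + rewrite (rsum_ext (fun u => x ^ hw (firstn (S i) (false::u)) * y ^ hw (skipn (S i) (false::u))) (fun u => x ^ hw (firstn i u) * y ^ hw (skipn i u))).
      2:{ intro u; unfold hw; simpl; ring. }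
      rewrite (rsum_ext (fun u => x ^ hw (firstn (S i) (true::u)) * y ^ hw (skipn (S i) (true::u))) (fun u => x * (x ^ hw (firstn i u) * y ^ hw (skipn i u)))).
      2:{ intro u; unfold hw; simpl; ring. }
      rewrite rsum_scal, IHn by lia. simpl. ring.
Qed.

Lemma neg_pow a n : (-a)^n = if Nat.even n then a^n else - a^n.
Proof.
  induction n; [reflexivity|]. cbn [pow]. rewrite IHn. rewrite Nat.even_succ. rewrite <- Nat.negb_even.
  destruct (Nat.even n); simpl; ring.
Qed.

Lemma hw_app u v : hw (u ++ v) = (hw u + hw v)%nat.
Proof. unfold hw. rewrite filter_app, length_app. reflexivity. Qed.

Lemma e_closed k i a : 0 < a < 1 ->  (i <= k)%nat ->
  e_ik k i a = ((1+a)^i - (1-a)^i) * ((1+a)^(k-i) - (1-a)^(k-i)) / (4 * Zk k a).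
Proof.
  intros Ha Hik.
  assert (HZ : 0 < Zk k a).
  { unfold Zk. assert (0 < (1+a)^k) by (apply pow_lt; lra).
    assert (0 < (1-a)^k) by (apply pow_lt; lra). lra. }
  unfold e_ik.
  rewrite (rsum_ext _ (fun u => / (4 * Zk k a) *
     (a ^ hw (firstn i u) * a ^ hw (skipn i u) +
      ((-1) * (a ^ hw (firstn i u) * (-a) ^ hw (skipn i u)) +
      ((-1) * ((-a) ^ hw (firstn i u) * a ^ hw (skipn i u)) +
       (-a) ^ hw (firstn i u) * (-a) ^ hw (skipn i u)))))).
  2:{ intro u. unfold Pk. replace (hw u) with (hw (firstn i u) + hw (skipn i u))%nat by (rewrite <- hw_app, firstn_skipn; reflexivity).
      rewrite Nat.even_add, <- Nat.negb_even, !neg_pow, pow_add.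
      destruct (Nat.even (hw (firstn i u))), (Nat.even (hw (skipn i u))); simpl; field; lra. }
  rewrite rsum_scal, !rsum_add, !rsum_scal, !Gsum by lia.
  replace (1 + - a) with (1 - a) by ring. field. lra.
Qed.

Lemma le_div c N D : 0 < D -> c * D <= N -> c <= N / D.
Proof. intros HD H. apply (Rmult_le_reg_r D); auto. unfold Rdiv. rewrite Rmult_assoc, Rinv_l; lra. Qed.
Lemma div_le c N D : 0 < D -> N <= c * D -> N / D <= c.
Proof. intros HD H. apply (Rmult_le_reg_r D); auto. unfold Rdiv. rewrite Rmult_assoc, Rinv_l; lra. Qed.

Lemma pw_facts a n : 0 < a < 1 -> 0 < (1+a)^n /\ 0 < (1-a)^n /\ (1-a)^n <= (1+a)^n.
Proof. intros Ha. split; [apply pow_lt; lra|]. split; [apply pow_lt; lra|]. apply pow_incr; lra. Qed.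

Lemma e_bounds a g i m : 0<a<1 -> 0<=g -> g*(1+a) <= a ->
  g^2 <= ((1+a)^(S i) - (1-a)^(S i))*((1+a)^(S m) - (1-a)^(S m)) /
     (4*(((1+a)^(S i + S m) + (1-a)^(S i + S m))/2)) <= 1/2.
Proof.
  intros Ha Hg HgA. rewrite !pow_add. cbn [pow].
  destruct (pw_facts a i Ha) as [Pi [Qi Hi]]. destruct (pw_facts a m Ha) as [Pm [Qm Hm]].
  set (pi := (1+a)^i) in *. set (qi := (1-a)^i) in *.
  set (pm := (1+a)^m) in *. set (qm := (1-a)^m) in *. clearbody pi qi pm qm.
  assert (h1 : (1+a)*pi - (1-a)*qi >= 2*a*pi) by nra.
  assert (h2 : (1+a)*pm - (1-a)*qm >= 2*a*pm) by nra.
  assert (h1' : (1+a)*pi - (1-a)*qi <= (1+a)*pi) by nra.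
  assert (h2' : (1+a)*pm - (1-a)*qm <= (1+a)*pm) by nra.
  assert (h4 : (1-a)*qi*((1-a)*qm) <= (1+a)*pi*((1+a)*pm)).
  { apply Rmult_le_compat; nra. }
  assert (h3 : ((1+a)*pi - (1-a)*qi)*((1+a)*pm - (1-a)*qm) >= (2*a*pi)*(2*a*pm)).
  { apply Rle_ge, Rmult_le_compat; nra. }
  assert (h3' : ((1+a)*pi - (1-a)*qi)*((1+a)*pm - (1-a)*qm) <= ((1+a)*pi)*((1+a)*pm)).
  { apply Rmult_le_compat; nra. }
  assert (hq : 0 <= (1-a)*qi*((1-a)*qm)) by (apply Rmult_le_pos; nra).
  assert (hP : 0 < pi*pm) by nra.
  assert (g2 : g^2*((1+a)*(1+a)) <= a*a).
  { replace (g^2*((1+a)*(1+a))) with ((g*(1+a))*(g*(1+a))) by ring.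
    apply Rmult_le_compat; nra. }
  split.
  - apply le_div; [nra|].
    apply Rle_trans with (4 * (g^2*((1+a)*(1+a))) * (pi*pm)); [nra|].
    apply Rle_trans with (4*(a*a)*(pi*pm)); [|nra].
    apply Rmult_le_compat_r; lra.
  - apply div_le; nra.
Qed.

Lemma p01_bounds a g m : 0<a<1 -> 0<=g -> g*(1+a) <= a ->
  g^2 <= a*((1+a)^(S m) - (1-a)^(S m)) / ((1+a)^(S (S m)) + (1-a)^(S (S m))) <= 1/2.
Proof.
  intros Ha Hg HgA. cbn [pow].
  destruct (pw_facts a m Ha) as [Pm [Qm Hm]].
  set (pm := (1+a)^m) in *. set (qm := (1-a)^m) in *. clearbody pm qm.
  assert (h2 : (1+a)*pm - (1-a)*qm >= 2*a*pm) by nra.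
  assert (hq : 0 <= (1-a)*((1-a)*qm)) by (apply Rmult_le_pos; nra).
  assert (g2 : g^2*((1+a)*(1+a)) <= a*a).
  { replace (g^2*((1+a)*(1+a))) with ((g*(1+a))*(g*(1+a))) by ring.
    apply Rmult_le_compat; nra. }
  assert (hd : (1-a)*((1-a)*qm) <= (1+a)*((1+a)*pm)).
  { apply Rmult_le_compat; nra. }
  split.
  - apply le_div; [nra|].
    apply Rle_trans with (2 * (g^2*((1+a)*(1+a))) * pm); [nra|].
    apply Rle_trans with (2*(a*a)*pm); [|nra].
    apply Rmult_le_compat_r; lra.
  - apply div_le; [nra|].
    (* 2a(A pm - B qm) <= A^2 pm + B^2 qm, with 2a = A - B *)
    assert (hx : 0 <= (1-a)*(1+a)*(qm+pm)) by (apply Rmult_le_pos; nra).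
    nra.
Qed.

Lemma p10_bounds a g m : 0<a<1 -> 0<=g -> g*(1+a) <= a ->
  g <= a*((1+a)^(S m) + (1-a)^(S m)) / ((1+a)^(S (S m)) - (1-a)^(S (S m))) <= 1/2.
Proof.
  intros Ha Hg HgA. cbn [pow].
  destruct (pw_facts a m Ha) as [Pm [Qm Hm]].
  set (pm := (1+a)^m) in *. set (qm := (1-a)^m) in *. clearbody pm qm.
  assert (hd : (1-a)*((1-a)*qm) < (1+a)*((1+a)*pm)).
  { apply Rmult_le_0_lt_compat; nra. }
  assert (hq : 0 <= (1-a)*((1-a)*qm)) by (apply Rmult_le_pos; nra).
  split.
  - apply le_div; [nra|].
    apply Rle_trans with (g*((1+a)*((1+a)*pm))); [nra|].
    apply Rle_trans with (a*((1+a)*pm)); [|nra].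
    replace (g*((1+a)*((1+a)*pm))) with ((g*(1+a))*((1+a)*pm)) by ring.
    apply Rmult_le_compat_r; nra.
  - apply div_le; [nra|].
    assert (hx : (1+a)*(1-a)*qm <= (1+a)*(1-a)*pm) by (apply Rmult_le_compat_l; nra).
    nra.
Qed.

Lemma gamma_A k gamma a : (1 <= k)%nat -> 0 < gamma -> is_alpha k gamma a -> gamma * (1+a) <= a.
Proof.
  intros Hk Hg [Ha Heq]. destruct k as [|k1]; [lia|].
  replace (S k1 - 1)%nat with k1 in Heq by lia. rewrite <- Heq. cbn [pow].
  destruct (pw_facts a k1 Ha) as [P [Q H]].
  set (p := (1+a)^k1) in *. set (q := (1-a)^k1) in *. clearbody p q.
  replace (a * (p - q) / ((1 + a) * p + (1 - a) * q) * (1 + a))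
    with (a * (p - q) * (1+a) / ((1 + a) * p + (1 - a) * q)) by (field; nra).
  apply div_le; nra.
Qed.

Theorem mainTheorem13 :
  forall gamma : R, 0 < gamma < 1 / 2 ->
  exists c : R, 0 < c /\
    forall (k i : nat) (alpha : R),
      (3 <= k)%nat -> (1 <= i <= k - 1)%nat ->
      is_alpha k gamma alpha ->
      in_c c (e_ik k i alpha) /\ in_c c (p01 k i alpha) /\ in_c c (p10 k i alpha).
Proof.
  intros gamma Hg. exists (gamma^2). split; [nra|].
  intros k i a Hk Hi Hal.
  assert (HgA := gamma_A k gamma a ltac:(lia) ltac:(lra) Hal).
  destruct Hal as [Ha _].
  destruct i as [|i']; [lia|].
  destruct (k - S i')%nat as [|m'] eqn:Em; [lia|].
  assert (Ek : k = (S i' + S m')%nat) by lia.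
  assert (g2 : gamma^2 <= gamma) by nra.
  assert (g4 : gamma^2 <= 1/2) by nra.
  unfold in_c. split; [|split].
  - rewrite e_closed by (lra || lia). rewrite Em. unfold Zk. rewrite Ek.
    destruct (e_bounds a gamma i' m' Ha ltac:(lra) HgA). lra.
  - unfold p01. rewrite Em, Nat.add_1_r.
    destruct (p01_bounds a gamma m' Ha ltac:(lra) HgA). lra.
  - unfold p10. rewrite Em, Nat.add_1_r.
    destruct (p10_bounds a gamma m' Ha ltac:(lra) HgA). lra.
Qed.
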